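(* Let $a\in \mathcal{A}$ and $k\in \mathbb{N}$. Then the following are equivalent: (1) $a\in \mathcal{A}^{\mathrm{gcEP}}$; (2) $a^k\in \mathcal{A}^{\mathrm{gcEP}}$. In this case, $(a^k)^{\mathrm{gcEP}}=(a^{\mathrm{gcEP}})^k$ and $a^{\mathrm{gcEP}}=a^{k-1}(a^k)^{\mathrm{gcEP}}$.
   Context: $\mathcal{A}$ is a complex Banach *-algebra with identity. An element $a$ has a generalized core-EP inverse if there is $x\in\mathcal{A}$ with $x=ax^2$, $(ax)^*=ax$, $\lim_{n\to\infty}\|a^n-xa^{n+1}\|^{1/n}=0$; such $x$ is unique, denoted $a^{\mathrm{gcEP}}$, and $\mathcal{A}^{\mathrm{gcEP}}$ is the set of such $a$. *)

(* Defs.v *)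
From HB Require Import structures.
From mathcomp Require Import all_boot all_order all_algebra.
From mathcomp Require Import all_classical all_reals all_analysis.
From mathcomp Require Import complex.
Set Implicit Arguments. Unset Strict Implicit. Unset Printing Implicit Defensive.
Import Order.TTheory GRing.Theory Num.Theory numFieldNormedType.Exports.
Local Open Scope ring_scope.
Local Open Scope complex_scope.
Local Open Scope classical_set_scope.
Local Open Scope ring_scope.

Definition cmod (R : realType) (c : R[i]) : R := Num.sqrt ((complex.Re c) ^+ 2 + (complex.Im c) ^+ 2).
Definition cconj (R : realType) (c : R[i]) : R[i] := complex.Complex (complex.Re c) (- complex.Im c).

Record banach_star_algebra (R : realType) (A : algType R[i])
    (star : A -> A) (nrm : A -> R) : Prop := BanachStarAlgebra {
  nrm_ge0 : forall x, 0 <= nrm x;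
  nrm_eq0 : forall x, nrm x = 0 -> x = 0;
  nrm_triangle : forall x y, nrm (x + y) <= nrm x + nrm y;
  nrm_scale : forall (c : R[i]) x, nrm (c *: x) = cmod c * nrm x;
  nrm_submult : forall x y, nrm (x * y) <= nrm x * nrm y;
  nrm_complete : forall u : nat -> A,
    (forall e : R, 0 < e -> exists N, forall m n, (N <= m)%N -> (N <= n)%N ->
       nrm (u m - u n) < e) ->
    exists l : A, forall e : R, 0 < e -> exists N, forall n, (N <= n)%N ->
       nrm (u n - l) < e;
  star_add : forall x y, star (x + y) = star x + star y;
  star_scale : forall (c : R[i]) x, star (c *: x) = cconj c *: star x;
  star_mul : forall x y, star (x * y) = star y * star x;
  star_invol : forall x, star (star x) = x
}.

Definition is_gcEP_inv (R : realType) (A : algType R[i])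
    (star : A -> A) (nrm : A -> R) (a x : A) : Prop :=
  [/\ x = a * x ^+ 2,
      star (a * x) = a * x &
      (fun n : nat => powR (nrm (a ^+ n - x * a ^+ n.+1)) (n%:R)^-1) @ \oo --> (0 : R)].

Definition has_gcEP (R : realType) (A : algType R[i])
    (star : A -> A) (nrm : A -> R) (a : A) : Prop :=
  exists x, is_gcEP_inv star nrm a x.

(* Main.v *)
Require Import Defs.
From HB Require Import structures.
From mathcomp Require Import all_boot all_order all_algebra.
From mathcomp Require Import all_classical all_reals all_analysis.
From mathcomp Require Import complex.
From mathcomp Require Import zify ring.
Set Implicit Arguments. Unset Strict Implicit.
Import Order.TTheory GRing.Theory Num.Theory numFieldNormedType.Exports.
Local Open Scope classical_set_scope.
Local Open Scope ring_scope.

Definition SES (R : realType) (u : nat -> R) :=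
  forall r : R, 0 < r -> exists M N, forall n, (N <= n)%N -> u n <= M * r ^+ n.

Section S.
Variable R : realType.
Implicit Types u v : nat -> R.

Lemma SES_le u v : (forall n, u n <= v n) -> SES v -> SES u.
Proof.
move=> uv Hv r r0; have [M [N HN]] := Hv r r0.
by exists M, N => n Hn; apply: le_trans (uv n) (HN n Hn).
Qed.

Lemma SES_scale u (K : R) : 0 <= K -> SES u -> SES (fun n => K * u n).
Proof.
move=> K0 Hv r r0; have [M [N HN]] := Hv r r0.
exists (K * M), N => n Hn; rewrite -mulrA; exact: ler_wpM2l (HN n Hn).
Qed.

Lemma SES_add u v : SES u -> SES v -> SES (fun n => u n + v n).
Proof.
move=> Hu Hv r r0; have [M [N HN]] := Hu r r0; have [M' [N' HN']] := Hv r r0.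
exists (M + M'), (maxn N N') => n; rewrite geq_max => /andP [h1 h2].
rewrite mulrDl; exact: lerD (HN n h1) (HN' n h2).
Qed.

Lemma SES_shift u j : SES u -> SES (fun n => u (n + j)%N).
Proof.
move=> Hu r r0; have [M [N HN]] := Hu r r0.
exists (M * r ^+ j), N => n Hn.
rewrite -mulrA -exprD [(j + n)%N]addnC; apply: HN; lia.
Qed.

Lemma SES_unshift u j : SES (fun n => u (n + j)%N) -> SES u.
Proof.
move=> Hu r r0; have [M [N HN]] := Hu r r0.
exists (M / r ^+ j), (N + j)%N => n Hn.
have hn : n = ((n - j) + j)%N by lia.
have h := HN (n - j)%N ltac:(lia); rewrite -hn in h.
apply: (le_trans h).
have rj : r ^+ j != 0 by rewrite expf_neq0 // gt_eqF.
have -> : r ^+ (n - j) = r ^+ n / r ^+ j.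
  by rewrite [in r ^+ n]hn exprD mulfK.
by rewrite mulrA mulrAC.
Qed.

Lemma SES_sub u k : (0 < k)%N -> SES u -> SES (fun n => u (k * n)%N).
Proof.
move=> k0 Hu r r0.
set s := Num.min r 1.
have s0 : 0 < s by rewrite lt_min r0 ltr01.
have s1 : s <= 1 by rewrite ge_min lexx orbT.
have sr : s <= r by rewrite ge_min lexx.
have [M [N HN]] := Hu s s0.
exists `|M|, N => n Hn.
apply: (le_trans (HN _ _)); first by apply: leq_trans Hn _; rewrite leq_pmull.
apply: (le_trans (ler_norm _)) => /=; rewrite normrM [`|s ^+ _|]ger0_norm; last by rewrite exprn_ge0 // ltW.
apply: ler_wpM2l => //; apply: (le_trans (ler_wiXn2l (ltW s0) s1 _)).
  exact: (leq_pmull n k0).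
by apply: lerXn2r => //; rewrite ?nnegrE; apply: ltW.
Qed.

Lemma iter_le u (L : R) : 0 <= L -> (forall n, u n.+1 <= L * u n) ->
  forall n j, u (n + j)%N <= L ^+ j * u n.
Proof.
move=> L0 HL n; elim=> [|j IH]; first by rewrite addn0 expr0 mul1r.
rewrite addnS exprS -mulrA; apply: (le_trans (HL _)); exact: ler_wpM2l.
Qed.

Lemma SES_ext0 u (L : R) k : (0 < k)%N -> 0 <= L -> (forall n, 0 <= u n) ->
  (forall n, u n.+1 <= L * u n) -> SES (fun m => u (k * m)%N) -> SES u.
Proof.
move=> k0 L0 u0 HL Hu r r0.
set s := Num.min r 1.
have s0 : 0 < s by rewrite lt_min r0 ltr01.
have s1 : s <= 1 by rewrite ge_min lexx orbT.
have sr : s <= r by rewrite ge_min lexx.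
have [M [N HN]] := Hu (s ^+ k) (exprn_gt0 _ s0).
exists ((L + 1) ^+ k * `|M| / s ^+ k), (k * N)%N => n Hn.
have hn : n = (k * (n %/ k) + n %% k)%N by rewrite mulnC -divn_eq.
have hm : (N <= n %/ k)%N by rewrite leq_divRL // mulnC.
have hj : (n %% k < k)%N by rewrite ltn_mod.
rewrite [in u n]hn.
apply: (le_trans (iter_le L0 HL _ _)).
have h1 : L ^+ (n %% k) <= (L + 1) ^+ k.
  have LL : L <= L + 1 by rewrite lerDl.
  have L10 : 0 <= L + 1 by rewrite addr_ge0.
  apply: (le_trans (lerXn2r _ _ _ LL)); rewrite ?nnegrE //.
  by apply: ler_weXn2l; [rewrite lerDr | exact: ltnW].
have h2 : u (k * (n %/ k))%N <= `|M| * s ^+ (k * (n %/ k)).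
  apply: (le_trans (HN _ hm)); rewrite -exprM; apply: ler_wpM2r; [by rewrite exprn_ge0 // ltW | exact: ler_norm].
apply: (le_trans (ler_pM (exprn_ge0 _ L0) (u0 _) h1 h2)).
rewrite -!mulrA; apply: ler_wpM2l; first by rewrite exprn_ge0 ?addr_ge0.
rewrite mulrA [X in _ <= X]mulrC mulrA.
rewrite ler_pdivlMr ?exprn_gt0 // [r ^+ n * _]mulrC -mulrA -exprD.
apply: ler_wpM2l => //.
apply: (le_trans (ler_wiXn2l (ltW s0) s1 _)); last first.
  by apply: lerXn2r => //; rewrite ?nnegrE; apply: ltW.
lia.
Qed.

Lemma pow2_big (B : R) : exists N, forall n, (N <= n)%N -> B <= 2 ^+ n.
Proof.
exists (Num.truncn B).+1 => n Hn.
apply/ltW/(lt_le_trans (truncnS_gt B)).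
apply: (@le_trans _ _ (n%:R)); first by rewrite ler_nat.
rewrite -natrX ler_nat; exact/ltnW/ltn_expl.
Qed.

Lemma SES_kill u (c K L : R) : 0 <= K -> 0 <= L ->
  (forall n, c <= K * u n * L ^+ n) -> SES u -> c <= 0.
Proof.
move=> K0 L0 Hc Hu.
set r := (2 * (L + 1))^-1.
have L1 : 0 < L + 1 by rewrite ltr_wpDl.
have r0 : 0 < r by rewrite invr_gt0 mulr_gt0.
have [M [N HN]] := Hu r r0.
rewrite leNgt; apply/negP => c0.
have [N' HN'] := pow2_big (`|K * M| / c + 1).
pose n := maxn N N'.
have Lr0 : 0 <= 2 * r * L by rewrite mulr_ge0 // mulr_ge0 // ltW.
have Lr : 2 * r * L <= 1.
  rewrite /r invfM mulrA mulfV ?pnatr_eq0 // mul1r mulrC ler_pdivrMr // mul1r.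
  by rewrite lerDl.
have h1 : c <= K * M * (r ^+ n * L ^+ n).
  apply: (le_trans (Hc n)); rewrite !mulrA; apply: ler_wpM2r; first exact: exprn_ge0.
  rewrite -mulrA; apply: ler_wpM2l => //; apply: HN; exact: leq_maxl.
have h2 : c * 2 ^+ n <= `|K * M|.
  apply: (le_trans (ler_wpM2r (exprn_ge0 _ (ler0n _ 2)) h1)).
  have -> : K * M * (r ^+ n * L ^+ n) * 2 ^+ n = K * M * (2 * r * L) ^+ n.
    by rewrite !exprMn; ring.
  apply: (le_trans (ler_norm _)); rewrite normrM [`|(_ ^+ n)|]ger0_norm ?exprn_ge0 //.
  by rewrite -[X in _ <= X]mulr1; apply: ler_wpM2l => //; apply: exprn_ile1.
have h3 := HN' n (leq_maxr _ _).
have := le_trans (ler_wpM2l (ltW c0) h3) h2.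
rewrite mulrDr mulr1 mulrC divfK ?gt_eqF // -lerBrDl subrr.
by rewrite leNgt c0.
Qed.

Lemma SES_of_cvg (u : nat -> R) : (forall n, 0 <= u n) ->
  (fun n : nat => powR (u n) (n%:R)^-1) @ \oo --> (0 : R) -> SES u.
Proof.
move=> u0 H r r0.
have [N _ HN] := @cvgr_lt _ _ _ _ _ _ H r r0.
exists 1, N.+1 => n Hn; rewrite mul1r.
have /= := HN n (leq_trans (leqnSn N) Hn) => lt.
have n0 : (0 < n)%N by apply: leq_trans Hn.
have -> : u n = powR (powR (u n) (n%:R)^-1) n%:R.
  by rewrite -powRrM mulVf ?pnatr_eq0 -?lt0n // powRr1.
rewrite powR_mulrn ?powR_ge0 //.
apply: lerXn2r; rewrite ?nnegrE ?powR_ge0 ?ltW //.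
Qed.

Lemma cvg_of_SES (u : nat -> R) : (forall n, 0 <= u n) ->
  SES u -> (fun n : nat => powR (u n) (n%:R)^-1) @ \oo --> (0 : R).
Proof.
move=> u0 H; apply/cvgr0Pnorm_le => e e0.
have [M [N HN]] := H (e / 2) (divr_gt0 e0 (ltr0Sn _ 1)).
have [N' HN'] := pow2_big M.
exists (maxn 1 (maxn N N')) => // n /= Hn.
rewrite geq_max in Hn; case/andP: Hn => n1; rewrite geq_max => /andP [nN nN'].
rewrite ger0_norm ?powR_ge0 //.
have n0 : n%:R != 0 :> R by rewrite pnatr_eq0 -lt0n.
have he : e = powR (e ^+ n) (n%:R)^-1.
  by rewrite -powR_mulrn ?ltW // -powRrM mulfV // powRr1 // ltW.
rewrite [X in _ <= X]he.
apply: (ge0_ler_powR (r:=n%:R^-1)); rewrite ?nnegrE ?invr_ge0 ?ler0n //.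
  by rewrite exprn_ge0 // ltW.
apply: (le_trans (HN n nN)).
have -> : e ^+ n = 2 ^+ n * (e / 2) ^+ n.
  by rewrite -exprMn mulrC divfK ?pnatr_eq0.
apply: ler_wpM2r; first by rewrite exprn_ge0 // ltW // divr_gt0.
exact: HN'.
Qed.
End S.
Arguments SES {R}.

Section Alg.
Variables (R : realType) (A : algType R[i]) (star : A -> A) (nrm : A -> R).
Hypothesis HA : banach_star_algebra star nrm.
Implicit Types a x y z : A.

Lemma nrm0 : nrm 0 = 0.
Proof.
rewrite -(scale0r (0 : A)) (nrm_scale HA) /cmod /=.
by rewrite expr0n /= addr0 sqrtr0 mul0r.
Qed.

Lemma nrmX x n : nrm (x ^+ n.+1) <= nrm x ^+ n.+1.
Proof.
elim: n => [|n IH]; first by rewrite !expr1.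
rewrite exprSr [nrm x ^+ _]exprSr.
apply: (le_trans (nrm_submult HA _ _)); apply: ler_wpM2r; first exact: nrm_ge0 HA _.
exact: IH.
Qed.

Lemma kill_elem (c u w v : A) (d : nat -> A) :
  (forall n, c = u * d n * w * v ^+ n.+1) -> SES (fun n => nrm (d n)) -> c = 0.
Proof.
move=> Hc Hd; apply: (nrm_eq0 HA); apply/eqP; rewrite eq_le (nrm_ge0 HA) andbT.
apply: (SES_kill (K := nrm u * nrm w * nrm v) (L := nrm v)) Hd.
- by rewrite !mulr_ge0 // (nrm_ge0 HA).
- exact: (nrm_ge0 HA).
move=> n; rewrite (Hc n).
have h1 := nrm_submult HA (u * d n * w) (v ^+ n.+1).
have h2 := nrm_submult HA (u * d n) w.
have h3 := nrm_submult HA u (d n).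
have h4 := nrmX v n.
have g := nrm_ge0 HA.
apply: (le_trans h1).
have -> : nrm u * nrm w * nrm v * nrm (d n) * nrm v ^+ n =
          nrm u * nrm (d n) * nrm w * nrm v ^+ n.+1 by rewrite exprS; ring.
apply: (ler_pM (g _) (g _) _ h4).
apply: (le_trans h2); apply: (ler_pM (g _) (g _) h3 (lexx _)).
Qed.

Definition dseq (a x : A) n := a ^+ n - x * a ^+ n.+1.

Lemma gc_SES a x : is_gcEP_inv star nrm a x -> SES (fun n => nrm (dseq a x n)).
Proof. by case=> _ _ h; apply: SES_of_cvg => // n; exact: nrm_ge0 HA _. Qed.

Lemma powx a x : x = a * x ^+ 2 -> forall m j, a ^+ m * x ^+ (m + j).+1 = x ^+ j.+1.
Proof.
move=> hx m j; elim: m => [|m IH]; first by rewrite mul1r.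
have e : a * x ^+ (m + j).+2 = x ^+ (m + j).+1.
  by rewrite -addn2 addnC exprD mulrA -hx -exprS.
by rewrite exprSr -mulrA addSn e.
Qed.

Lemma powx0 a x : x = a * x ^+ 2 -> forall m, a ^+ m * x ^+ m.+1 = x.
Proof. by move=> hx m; have := powx hx m 0; rewrite addn0 expr1. Qed.

Lemma xax a x : is_gcEP_inv star nrm a x -> x * a * x = x.
Proof.
move=> H; have hd := gc_SES H; case: H => hx _ _.
apply/eqP; rewrite eq_sym -subr_eq0; apply/eqP.
apply: (kill_elem (u := 1) (w := 1) (v := x) (d := dseq a x)) hd => n.
rewrite /dseq mul1r mulr1 mulrBl -mulrA powx0 // exprS -[x * (a * _) * _]mulrA.
by rewrite -[(a * _) * _]mulrA powx0.
Qed.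

Lemma gc_uniq a x z : is_gcEP_inv star nrm a x -> is_gcEP_inv star nrm a z -> x = z.
Proof.
move=> Hx Hz.
have dx := gc_SES Hx; have dz := gc_SES Hz.
have zaz := xax Hz.
case: Hx => hx sx _; case: Hz => hz sz _.
have k1 : forall x z, x = a * x ^+ 2 -> z = a * z ^+ 2 ->
   SES (fun n => nrm (dseq a x n)) -> a * z = a * x * (a * z).
  move=> x' z' hx' hz' d'; apply/eqP; rewrite -subr_eq0; apply/eqP.
  apply: (kill_elem (u := a) (w := 1) (v := z') (d := dseq a x')) d' => n.
  have h1 : a * a ^+ n * z' ^+ n.+1 = a * z' by rewrite -mulrA powx0.
  have h2 : a * (x' * a ^+ n.+1) * z' ^+ n.+1 = a * x' * (a * z').
    by rewrite -h1 exprS !mulrA.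
  by rewrite /dseq mulr1 mulrBr mulrBl h1 h2.
have e1 := k1 x z hx hz dx.
have e2 := k1 z x hz hx dz.
have pq : a * x = a * z.
  by rewrite -sx e2 (star_mul HA) sz sx -e1.
have : x = z * a * x.
  apply/eqP; rewrite -subr_eq0; apply/eqP.
  apply: (kill_elem (u := 1) (w := 1) (v := x) (d := dseq a z)) dz => n.
  rewrite /dseq mul1r mulr1 mulrBl -mulrA powx0 // exprS -[z * (a * _) * _]mulrA.
  by rewrite -[(a * _) * _]mulrA powx0.
by rewrite -mulrA pq mulrA zaz.
Qed.

Lemma tel a x : is_gcEP_inv star nrm a x ->
  forall j, SES (fun m => nrm (a ^+ m - x ^+ j * a ^+ (m + j)%N)).
Proof.
move=> H; have hd := gc_SES H; elim=> [|j IH].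
  apply: (SES_le (v := fun _ => 0)) => [n|r r0]; first by rewrite expr0 mul1r addn0 subrr nrm0.
  by exists 0, 0%N => n _; rewrite mul0r.
have hs := SES_add IH (SES_scale (nrm_ge0 HA (x ^+ j)) (SES_shift j hd)).
apply: (SES_le _ hs) => m /=.
have -> : a ^+ m - x ^+ j.+1 * a ^+ (m + j.+1)%N =
   (a ^+ m - x ^+ j * a ^+ (m + j)%N) + x ^+ j * dseq a x (m + j)%N.
  by rewrite /dseq mulrBr mulrA -exprSr -addnS addrA subrK.
apply: (le_trans (nrm_triangle HA _ _)); apply: lerD => //.
exact: (nrm_submult HA).
Qed.

Lemma forward a x k : is_gcEP_inv star nrm a x ->
  is_gcEP_inv star nrm (a ^+ k.+1) (x ^+ k.+1).
Proof.
move=> H; have ht := tel H k.+1; case: (H) => hx sx _.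
have e1 : a ^+ k.+1 * x ^+ k.+1 = a * x by rewrite exprS -mulrA powx0.
split.
- rewrite -exprM; have := powx hx k.+1 k.
  by have -> : (k.+1 * 2 = (k.+1 + k).+1)%N by lia.
- by rewrite e1.
apply: cvg_of_SES => [n|]; first exact: nrm_ge0 HA _.
have := SES_sub (ltn0Sn k) ht; apply: SES_le => n /=.
rewrite -!exprM.
by have -> : (k.+1 * n.+1 = k.+1 * n + k.+1)%N by lia.
Qed.

Lemma backward a y k : is_gcEP_inv star nrm (a ^+ k.+1) y ->
  is_gcEP_inv star nrm a (a ^+ k * y).
Proof.
move=> H; have hd := gc_SES H; case: (H) => hy sy _.
set b := a ^+ k.+1.
have comm : forall m, b ^+ m * a ^+ k = a ^+ k * b ^+ m.
  by move=> m; rewrite /b -!exprM -!exprD addnC.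
have eab : a * (a ^+ k * y) = b * y by rewrite mulrA -exprS.
split.
- have T : forall n, b ^+ n.+1 * a ^+ k * y * y ^+ n.+1 = a ^+ k * y.
    move=> n; rewrite comm -!mulrA -exprS.
    by have := powx0 hy n.+1; rewrite /b => ->.
  have c0 : a ^+ k * y - b * y * (a ^+ k * y) = 0.
    apply: (kill_elem (u := b) (w := a ^+ k * y) (v := y) (d := dseq b y)) hd => n.
    have h1 : b * b ^+ n * (a ^+ k * y) * y ^+ n.+1 = a ^+ k * y.
      by rewrite -[in RHS](T n) [b ^+ n.+1]exprS !mulrA.
    have h2 : b * (y * b ^+ n.+1) * (a ^+ k * y) * y ^+ n.+1 = b * y * (a ^+ k * y).
      by rewrite -[in RHS](T n) !mulrA.
    by rewrite /dseq mulrBr !mulrBl h1 h2.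
  move/eqP: c0; rewrite subr_eq0 => /eqP {1}->.
  by rewrite expr2 [in RHS]mulrA eab.
- by rewrite eab.
apply: cvg_of_SES => [n|]; first exact: nrm_ge0 HA _.
apply: (@SES_unshift _ _ k).
apply: (@SES_ext0 _ _ (nrm a) k.+1) => //.
- exact: nrm_ge0 HA _.
- by move=> n; exact: nrm_ge0 HA _.
- move=> n /=; rewrite addSn.
  have -> : a ^+ (n + k).+1 - a ^+ k * y * a ^+ (n + k).+2 =
            (a ^+ (n + k) - a ^+ k * y * a ^+ (n + k).+1) * a.
    by rewrite mulrBl -[a ^+ k * y * _ * a]mulrA -!exprSr.
  by rewrite mulrC; apply: (nrm_submult HA).
apply: (SES_le _ (SES_scale (nrm_ge0 HA (a ^+ k)) hd)) => m /=.
have -> : a ^+ (k.+1 * m + k)%N - a ^+ k * y * a ^+ (k.+1 * m + k).+1 =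
          a ^+ k * dseq b y m.
  rewrite /dseq mulrBr mulrA /b -!exprM.
  have -> : ((k.+1 * m + k).+1 = k.+1 * m.+1)%N by lia.
  by rewrite -exprD addnC.
exact: (nrm_submult HA).
Qed.
End Alg.

Theorem lemma3p4 (R : realType) (A : algType R[i]) (star : A -> A) (nrm : A -> R)
  (HA : banach_star_algebra star nrm) (a : A) (k : nat) (hk : (1 <= k)%N) :
  (has_gcEP star nrm a <-> has_gcEP star nrm (a ^+ k)) /\
  (forall x y : A, is_gcEP_inv star nrm a x -> is_gcEP_inv star nrm (a ^+ k) y ->
     y = x ^+ k /\ x = a ^+ k.-1 * y).
Proof.
case: k hk => [//|k] _ /=; split.
  split.
    by case=> x Hx; exists (x ^+ k.+1); apply: (forward HA).
  by case=> y Hy; exists (a ^+ k * y); apply: (backward HA).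
move=> x y Hx Hy.
have Hf := forward HA k Hx.
have ey : y = x ^+ k.+1 by apply: (gc_uniq HA Hy Hf).
split => //; rewrite ey; case: Hx => hx _ _; by rewrite powx0.
Qed.
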